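(* Let $\kappa>0$, let $N\ge2$ be even, and let $X_N\in\mathbb R^{(N-1)\times(N-1)}$ be the matrix with entries $(X_N)_{ij}=a_{i\wedge j}\,a_{N-(i\vee j)}/a_N$ for $1\le i,j\le N-1$. Then for all $k\ge1$ and all $1\le i\le j\le N/2$: $$(X_N^k)_{N/2,N/2}\ge\frac{a_{N/2}^2\big\{\sum_{l=1}^{N-1}a_{l\wedge(N-l)}^2\big\}^{k-1}}{a_N^k},$$ $$(X_N^k)_{N/2,i}=(X_N^k)_{N/2,N-i},\qquad (X_N^k)_{N/2,i}\le(X_N^k)_{N/2,j},\qquad (X_N^k)_{N/2,i}\ge\frac{a_i}{a_{N/2}}(X_N^k)_{N/2,N/2}.$$
   Context: The sequence $\{a_i\}_{i\ge0}$ is defined by $a_0=0$, $a_1=1$ and $a_i=(2+\kappa^2/N^2)a_{i-1}-a_{i-2}$ for $i\ge2$. *)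

(* Defs.v *)
From HB Require Import structures.
From mathcomp Require Import all_boot all_order all_algebra.
From mathcomp Require Import reals.
Set Implicit Arguments. Unset Strict Implicit. Unset Printing Implicit Defensive.
Import Order.TTheory GRing.Theory Num.Theory.
Local Open Scope ring_scope.

Section Defs.
Variable R : realType.

(* pairs (a_n, a_{n+1}) for the recurrence a_i = c a_{i-1} - a_{i-2} *)
Fixpoint apair (c : R) (n : nat) : R * R :=
  match n with
  | 0 => (0, 1)
  | n'.+1 => let p := apair c n' in (p.2, c * p.2 - p.1)
  end.

(* a_n for a_0 = 0, a_1 = 1, a_i = (2 + kappa^2/N^2) a_{i-1} - a_{i-2} *)
Definition aseq (kappa : R) (N n : nat) : R :=
  (apair (2 + kappa ^+ 2 / (N%:R) ^+ 2) n).1.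

(* X_N, stored 0-based: entry (i,j) is paper entry (i+1, j+1) *)
Definition XN (kappa : R) (N : nat) : 'M[R]_(N.-1) :=
  \matrix_(i < N.-1, j < N.-1)
    (aseq kappa N (minn i.+1 j.+1) * aseq kappa N (N - maxn i.+1 j.+1)
      / aseq kappa N N).

End Defs.

(* 1-based entry access: ent M p q = M_{p,q} for 1 <= p, q <= n (0 otherwise) *)
Definition ent (R : Type) (n : nat) (d : R) (M : 'M[R]_n) (p q : nat) : R :=
  match @insub _ (fun x => x < n)%N _ p.-1, @insub _ (fun x => x < n)%N _ q.-1 with
  | Some i, Some j => M i j
  | _, _ => d
  end.

(* Main.v *)
Require Import Defs.

From HB Require Import structures.
From mathcomp Require Import all_boot all_order all_algebra.
From mathcomp Require Import reals.
From mathcomp Require Import zify ring lra.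
Import Order.TTheory GRing.Theory Num.Theory.
Local Open Scope ring_scope.

Lemma entE (R : Type) (n : nat) (d : R) (M : 'M[R]_n) (i j : 'I_n) :
  ent d M i.+1 j.+1 = M i j.
Proof.
case: i => i hi; case: j => j hj; rewrite /ent /= (insubT (fun x => x < n)%N hi) (insubT (fun x => x < n)%N hj) /=.
by [] || (f_equal; apply: val_inj).
Qed.

Lemma ent_out (R : Type) (n : nat) (d : R) (M : 'M[R]_n) p q :
  (n < q)%N -> ent d M p q = d.
Proof.
move=> h; rewrite /ent (@insubF _ (fun x => x < n)%N _ q.-1); last by apply/negbTE; rewrite -leqNgt; lia.
by case: insub.
Qed.

Section Main.
Variable R : realType.
Variables (c : R) (a : nat -> R) (n N m : nat).
Hypotheses (Hc : 2 < c) (a0 : a 0%N = 0) (a1 : a 1%N = 1)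
  (aSS : forall k, a k.+2 = c * a k.+1 - a k) (HN : N = n.+1) (Hm : N = (m + m)%N)
  (Hm1 : (1 <= m)%N).

Lemma a_facts k : 0 <= a k /\ 1 <= a k.+1 - a k.
Proof.
elim: k => [|k [h1 h2]]; first by rewrite a1 a0 subr0 lexx.
split; first lra.
rewrite aSS; have Hc2 := Hc; have : 0 <= (c - 2) * a k.+1 by apply: mulr_ge0; lra.
lra.
Qed.

Lemma a_ge0 k : 0 <= a k.
Proof. by case: (a_facts k). Qed.

Lemma a_le i j : (i <= j)%N -> a i <= a j.
Proof.
move=> lij; rewrite -(subnK lij); elim: (j - i)%N => [|d IH]; first by rewrite add0n.
rewrite addSn; have [_ h] := a_facts (d + i); lra.
Qed.

Lemma a_gt0 k : (0 < k)%N -> 0 < a k.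
Proof.
case: k => // k _; have [h1 h2] := a_facts k; lra.
Qed.

Lemma a_add p r : a (p.+1 + r) = a p.+1 * a r.+1 - a p * a r.
Proof.
suff: a (p.+1 + r) = a p.+1 * a r.+1 - a p * a r /\
      a (p.+1 + r.+1) = a p.+1 * a r.+2 - a p * a r.+1 by case.
elim: r => [|r [IH1 IH2]].
  by rewrite addn0 addn1 (aSS 0) (aSS p) a1 a0; split; ring.
split => //.
have e : a (p.+1 + r.+2) = c * a (p.+1 + r.+1) - a (p.+1 + r) by rewrite !addnS aSS.
by rewrite e IH1 IH2 (aSS r.+1) (aSS r); ring.
Qed.

Definition G l q := a (minn l q) * a (N - maxn l q) / a N.

Lemma aN_gt0 : 0 < a N. Proof. apply: a_gt0; lia. Qed.

Lemma G_ge0 l q : 0 <= G l q.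
Proof. by rewrite /G divr_ge0 ?mulr_ge0 ?a_ge0. Qed.

Lemma G_L l q : (1 <= l <= n)%N -> (1 <= q <= n)%N ->
  c * G l q - G l q.-1 - G l q.+1 = (l == q)%:R.
Proof.
move=> hl hq; rewrite /G; have [hlq|[hlq|hlq]] : (l < q)%N \/ (q < l)%N \/ l = q by lia.
- have -> : minn l q = l by lia.
  have -> : minn l q.-1 = l by lia.
  have -> : minn l q.+1 = l by lia.
  have -> : (N - maxn l q = (N - q.+1).+1)%N by lia.
  have -> : (N - maxn l q.-1 = (N - q.+1).+2)%N by lia.
  have -> : (N - maxn l q.+1 = (N - q.+1))%N by lia.
  rewrite aSS (ltn_eqF hlq) /=; ring.
- have -> : minn l q = q.-1.+1 by lia.
  have -> : minn l q.-1 = q.-1 by lia.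
  have -> : minn l q.+1 = q.-1.+2 by lia.
  have -> : maxn l q = l by lia.
  have -> : maxn l q.-1 = l by lia.
  have -> : maxn l q.+1 = l by lia.
  rewrite aSS (gtn_eqF hlq) /=; ring.
- rewrite hlq eqxx.
  have [p ep] : exists p, q = p.+1 by exists q.-1; lia.
  have [r er] : exists r, (N - q = r.+1)%N by exists (N - q.+1)%N; lia.
  have -> : minn q q = p.+1 by lia.
  have -> : minn q q.-1 = p by lia.
  have -> : minn q q.+1 = p.+1 by lia.
  have -> : (N - maxn q q = r.+1)%N by lia.
  have -> : (N - maxn q q.-1 = r.+1)%N by lia.
  have -> : (N - maxn q q.+1 = r)%N by lia.
  have eN : a N = a p.+1 * (c * a r.+1 - a r) - a p * a r.+1.
    by rewrite -aSS -a_add; congr (a _); lia.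
  have nz : a N != 0 by rewrite gt_eqF // aN_gt0.
  move: nz; rewrite eN /= mulr1n => nz; field; exact: nz.
Qed.

Lemma sum_delta (F : nat -> R) q : (1 <= q <= n)%N ->
  \sum_(l < n) F l.+1 * (l.+1 == q)%:R = F q.
Proof.
move=> hq; have hq' : (q.-1 < n)%N by lia.
rewrite (bigD1 (Ordinal hq')) //= big1 => [|l hl].
  by rewrite prednK ?eqxx ?mulr1 ?addr0 //; lia.
case: eqP => [e|_]; last by rewrite mulr0.
have : l == Ordinal hq' by apply/eqP/val_inj => /=; lia.
by rewrite (negbTE hl).
Qed.

Section Step.
Variables (u w : nat -> R).
Hypothesis Hw : forall q, w q = \sum_(l < n) u l.+1 * G l.+1 q.

Lemma step_ge0 : (forall q, 0 <= u q) -> forall q, 0 <= w q.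
Proof.
by move=> hu q; rewrite Hw; apply: sumr_ge0 => l _; rewrite mulr_ge0 ?G_ge0.
Qed.

Lemma step_w0 : w 0%N = 0.
Proof.
rewrite Hw big1 // => l _; by rewrite /G minn0 a0 !mul0r mulr0.
Qed.

Lemma G_sym l q : (l <= N)%N -> (q <= N)%N -> G (N - l) (N - q) = G l q.
Proof.
move=> hl hq; rewrite /G.
have -> : minn (N - l) (N - q) = (N - maxn l q)%N by lia.
have -> : (N - maxn (N - l) (N - q))%N = minn l q by lia.
by rewrite (mulrC (a (N - maxn l q)%N)).
Qed.

Lemma step_sym : (forall q, (q <= N)%N -> u q = u (N - q)%N) ->
  forall q, (q <= N)%N -> w q = w (N - q)%N.
Proof.
move=> hu q hq; rewrite !Hw (reindex_inj rev_ord_inj) /=.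
apply: eq_bigr => l _ /=.
have -> : (n - l.+1).+1 = (N - l.+1)%N by have := ltn_ord l; lia.
rewrite -hu; last by have := ltn_ord l; lia.
rewrite -(G_sym (l.+1) (N - q)); [|by have := ltn_ord l; lia|by lia].
by have -> : (N - (N - q))%N = q by lia.
Qed.

Lemma G_ratio l i j : (i <= j)%N -> (j <= N)%N ->
  a i * G l j <= G l i * a j.
Proof.
move=> hij hjN; rewrite /G.
have hinv : 0 <= (a N)^-1 by rewrite invr_ge0 a_ge0.
have hai := a_ge0 i; have haj := a_ge0 j; have hal := a_ge0 l.
have [hjl|[hil|hli]] : (j <= l)%N \/ (i <= l <= j)%N \/ (l <= i)%N by lia.
- have -> : minn l j = j by lia.
  have -> : minn l i = i by lia.
  have -> : maxn l j = l by lia.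
  have -> : maxn l i = l by lia.
  by rewrite le_eqVlt; apply/orP; left; apply/eqP; ring.
- have -> : minn l j = l by lia.
  have -> : minn l i = i by lia.
  have -> : maxn l j = j by lia.
  have -> : maxn l i = l by lia.
  have h1 : a l * a (N - j)%N <= a j * a (N - l)%N.
    by apply: ler_pM; rewrite ?a_ge0 ?a_le //; lia.
  have h2 : 0 <= a i * (a N)^-1 by apply: mulr_ge0.
  nra.
- have -> : minn l j = l by lia.
  have -> : minn l i = l by lia.
  have -> : maxn l j = j by lia.
  have -> : maxn l i = i by lia.
  have h1 : a i * a (N - j)%N <= a j * a (N - i)%N.
    by apply: ler_pM; rewrite ?a_ge0 ?a_le //; lia.
  have h2 : 0 <= a l * (a N)^-1 by apply: mulr_ge0.
  nra.
Qed.

Lemma step_ratio : (forall q, 0 <= u q) -> forall i j, (i <= j)%N -> (j <= N)%N ->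
  a i * w j <= w i * a j.
Proof.
move=> hu i j hij hjN; rewrite !Hw mulr_sumr mulr_suml; apply: ler_sum => l _.
rewrite mulrCA -mulrA; apply: ler_wpM2l => //; exact: G_ratio.
Qed.

Lemma step_L q : (0 < q)%N -> (q <= n)%N -> c * w q - w q.-1 - w q.+1 = u q.
Proof.
move=> h1 h2; rewrite !Hw mulr_sumr -!sumrB -(sum_delta u q); last by lia.
apply: eq_bigr => l _; rewrite -G_L; last by lia.
  ring.
have := ltn_ord l; lia.
Qed.

End Step.

Lemma min_principle (D : nat -> R) M : 0 <= D 0%N ->
  (forall i, (i.+2 < M)%N -> D i + D i.+2 <= c * D i.+1) ->
  (forall i, i.+2 = M -> D i <= (c + 1) * D i.+1) ->
  forall i, (i < M)%N -> 0 <= D i.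
Proof.
move=> H0 Hmid Hend i hi; have Hc2 := Hc.
have [j [hj hmin]] : exists j, (j <= M.-1)%N /\ forall i, (i <= M.-1)%N -> D j <= D i.
  elim: M.-1 => [|K [j [hj hmin]]].
    by exists 0%N; split => // i'; rewrite leqn0 => /eqP ->.
  case: (lerP (D j) (D K.+1)) => h.
    exists j; split; first lia.
    move=> i'; rewrite leq_eqVlt => /orP [/eqP ->|hi'] //; apply: hmin; lia.
  exists K.+1; split => // i'; rewrite leq_eqVlt => /orP [/eqP ->|hi']//.
  have := hmin i' ltac:(lia); lra.
case: (lerP 0 (D j)) => hDj.
  have := hmin i ltac:(lia); lra.
exfalso; case: j hj hmin hDj => [|j] hj hmin hDj; first lra.
case: (ltnP j.+2 M) => hjM.
  have := Hmid j hjM; have := hmin j ltac:(lia);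
  have := hmin j.+2 ltac:(lia); nra.
have := Hend j ltac:(lia); have := hmin j ltac:(lia); nra.
Qed.

Lemma step_mono (u w : nat -> R) :
  (forall q, w q = \sum_(l < n) u l.+1 * G l.+1 q) ->
  (forall q, 0 <= u q) ->
  (forall q, (q <= N)%N -> u q = u (N - q)%N) ->
  (forall i j, (0 < i)%N -> (i <= j)%N -> (j <= m)%N -> u i <= u j) ->
  forall i j, (i <= j)%N -> (j <= m)%N -> w i <= w j.
Proof.
move=> Hw hu0 hus hum.
have wsym := step_sym u w Hw hus.
have w0 := step_w0 u w Hw.
have wge := step_ge0 u w Hw hu0.
have L := step_L u w Hw.
have hD : forall i, (i < m)%N -> 0 <= w i.+1 - w i.
  apply: min_principle.
  - by rewrite w0 subr0.
  - move=> i hi.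
    have := L i.+1 isT ltac:(lia); have := L i.+2 isT ltac:(lia).
    have := hum i.+1 i.+2 isT ltac:(lia) ltac:(lia).
    rewrite /=. lra.
  - move=> i hi.
    have := L i.+1 isT ltac:(lia); have := L i.+2 isT ltac:(lia).
    have := hum i.+1 i.+2 isT ltac:(lia) ltac:(lia).
    have := wsym i.+3 ltac:(lia).
    have -> : (N - i.+3)%N = i.+1 by lia.
    rewrite /=. lra.
move=> i j hij hjm; elim: j hij hjm => [|j IH] hij hjm.
  by move: hij; rewrite leqn0 => /eqP ->.
case: (ltnP j i) => h.
  by have -> : i = j.+1 by lia.
have := IH h ltac:(lia); have := hD j ltac:(lia); lra.
Qed.


Variable X : 'M[R]_n.
Hypothesis HX : forall i j : 'I_n, X i j = G i.+1 j.+1.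

Definition V k q := if (0 < q)%N then ent 0 (X ^+ k) m q else 0.

Lemma V_rec k q : V k.+1 q = \sum_(l < n) V k l.+1 * G l.+1 q.
Proof.
rewrite /V; case: (posnP q) => [->|hq].
  by rewrite /= big1 // => l _; rewrite /G minn0 a0 !mul0r mulr0.
rewrite ?hq; case: (leqP q n) => hqn.
  have hm' : (m.-1 < n)%N by lia.
  have hq' : (q.-1 < n)%N by lia.
  have -> : ent 0 (X ^+ k.+1) m q = (X ^+ k.+1) (Ordinal hm') (Ordinal hq').
    by rewrite -(@entE _ _ 0) /= !prednK //; lia.
  rewrite exprSr -mulmxE mxE; apply: eq_bigr => l _ /=.
  have -> : ent 0 (X ^+ k) m l.+1 = (X ^+ k) (Ordinal hm') l.
    by rewrite -(@entE _ _ 0) /= prednK //; lia.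
  by rewrite HX /= prednK.
rewrite ent_out // big1 // => l _.
rewrite /G; have -> : (N - maxn l.+1 q = 0)%N by lia.
by rewrite a0 mulr0 mul0r mulr0.
Qed.

Lemma V0 q : V 0 q = (q == m)%:R.
Proof.
rewrite /V; case: (posnP q) => [->|hq].
  by case: eqP => // e; move: Hm1; rewrite -e.
rewrite ?hq; case: (leqP q n) => hqn.
  have hm' : (m.-1 < n)%N by lia.
  have hq' : (q.-1 < n)%N by lia.
  have -> : ent 0 (X ^+ 0) m q = (X ^+ 0) (Ordinal hm') (Ordinal hq').
    by rewrite -(@entE _ _ 0) /= !prednK //; lia.
  rewrite expr0 mxE -val_eqE /=.
  by case: eqP => e1; case: eqP => e2 //; lia.
rewrite ent_out //; case: eqP => // e; lia.
Qed.

Lemma Vinv k : [/\ forall q, 0 <= V k q,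
  forall q, (q <= N)%N -> V k q = V k (N - q)%N &
  forall i j, (0 < i)%N -> (i <= j)%N -> (j <= m)%N -> V k i <= V k j].
Proof.
elim: k => [|k [h1 h2 h3]].
  split.
  - by move=> q; rewrite V0 ler0n.
  - by move=> q hq; rewrite !V0; case: eqP => e1; case: eqP => e2 //; lia.
  - move=> i j hi hij hj; rewrite !V0; case: eqP => e1.
      have -> : j = m by lia.
      by rewrite eqxx.
    by case: eqP.
have Hw := V_rec k.
split.
- exact: step_ge0 Hw h1.
- exact: step_sym Hw h2.
- move=> i j _; exact: step_mono Hw h1 h2 h3 i j.
Qed.


Lemma Vratio k : (0 < k)%N -> forall i j, (i <= j)%N -> (j <= N)%N ->
  a i * V k j <= V k i * a j.
Proof.
case: k => // k _; have [h1 _ _] := Vinv k.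
exact: step_ratio (V k) (V k.+1) (V_rec k) h1.
Qed.

Lemma G_mid l : (0 < l < N)%N -> G l m = a (minn l (N - l)) * a m / a N.
Proof.
move=> hl; rewrite /G; have [h|h] : (l <= m)%N \/ (m < l)%N by lia.
  have -> : minn l m = l by lia.
  have -> : minn l (N - l) = l by lia.
  by have -> : (N - maxn l m = m)%N by lia.
have -> : minn l m = m by lia.
have -> : minn l (N - l) = (N - l)%N by lia.
have -> : maxn l m = l by lia.
by rewrite (mulrC (a m)).
Qed.

Lemma main k : (1 <= k)%N ->
  a m ^+ 2 * (\sum_(1 <= l < N) a (minn l (N - l)) ^+ 2) ^+ k.-1 / a N ^+ k
    <= ent 0 (X ^+ k) m m
  /\ forall i j, (1 <= i)%N -> (i <= j)%N -> (j <= m)%N ->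
   [/\ ent 0 (X ^+ k) m i = ent 0 (X ^+ k) m (N - i),
       ent 0 (X ^+ k) m i <= ent 0 (X ^+ k) m j
     & a i / a m * ent 0 (X ^+ k) m m <= ent 0 (X ^+ k) m i].
Proof.
move=> hk.
have VE : forall q, (0 < q)%N -> ent 0 (X ^+ k) m q = V k q by move=> q hq; rewrite /V hq.
have am : 0 < a m := a_gt0 m Hm1.
split; last first.
  have [h1 h2 h3] := Vinv k.
  move=> i j hi hij hj.
  rewrite (VE i ltac:(lia)) (VE (N - i)%N ltac:(lia)) (VE j ltac:(lia)) (VE m ltac:(lia)).
  split.
  - apply: h2; lia.
  - apply: h3 => //; lia.
  - rewrite mulrAC ler_pdivrMr //; apply: Vratio => //; lia.
rewrite VE; last by lia.
set S := \sum_(1 <= l < N) _.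
have eS : S = \sum_(l < n) a (minn l.+1 (N - l.+1)) ^+ 2.
  by rewrite /S HN big_add1 /= big_mkord.
have S0 : 0 <= S by rewrite /S; apply: sumr_ge0 => l _; exact: sqr_ge0.
have aN := aN_gt0.
clear VE; elim: k hk => // k IH _.
case: (posnP k) => [->|hk0].
  rewrite V_rec; under eq_bigr => l _ do rewrite V0 mulrC.
  rewrite (sum_delta (G ^~ m)); last by lia.
  rewrite /G minnn maxnn.
  have -> : (N - m = m)%N by lia.
  by rewrite expr0 mulr1 expr1 expr2.
have IH' := IH hk0.
have [h1 h2 h3] := Vinv k.
case: k IH IH' hk0 h1 h2 h3 => // k _ IH' _ h1 h2 h3.
have e : a m ^+ 2 * S ^+ k.+1.+1.-1 / a N ^+ k.+2 =
   (a m ^+ 2 * S ^+ k.+1.-1 / a N ^+ k.+1) * (S / a N).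
  rewrite /= !exprS; field.
  by rewrite expf_neq0 // gt_eqF.
rewrite e; apply: le_trans (ler_wpM2r _ IH') _.
  by apply: divr_ge0 => //; exact: ltW.
rewrite [leRHS]V_rec eS big_distrl big_distrr /=; apply: ler_sum => l _.
have hl := ltn_ord l.
rewrite G_mid; last by lia.
have hr : a (minn l.+1 (N - l.+1)) * V k.+1 m <= V k.+1 l.+1 * a m.
  case: (leqP l.+1 m) => hlm.
    have -> : minn l.+1 (N - l.+1) = l.+1 by lia.
    apply: Vratio => //; lia.
  have -> : minn l.+1 (N - l.+1) = (N - l.+1)%N by lia.
  rewrite (h2 l.+1); last by lia.
  apply: Vratio => //; lia.
set b := a (minn l.+1 (N - l.+1)) in hr *.
have hb : 0 <= b * (a N)^-1 by rewrite mulr_ge0 ?a_ge0 // invr_ge0 ltW.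
nra.
Qed.

End Main.

Theorem lemmaA3 (R : realType) (kappa : R) (N : nat) :
  0 < kappa -> (2 <= N)%N -> ~~ odd N ->
  let a := aseq kappa N in
  let X := XN kappa N in
  forall k : nat, (1 <= k)%N ->
    ent 0 (X ^+ k) (N./2) (N./2) >=
      a (N./2) ^+ 2 * (\sum_(1 <= l < N) a (minn l (N - l)) ^+ 2) ^+ k.-1
        / a N ^+ k
    /\ forall i j : nat, (1 <= i)%N -> (i <= j)%N -> (j <= N./2)%N ->
      [/\ ent 0 (X ^+ k) (N./2) i = ent 0 (X ^+ k) (N./2) (N - i),
          ent 0 (X ^+ k) (N./2) i <= ent 0 (X ^+ k) (N./2) j
        & ent 0 (X ^+ k) (N./2) i >= a i / a (N./2) * ent 0 (X ^+ k) (N./2) (N./2)].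
Proof.
move=> hk hN hodd a X k hk1.
set c := 2 + kappa ^+ 2 / (N%:R) ^+ 2.
have Hc : 2 < c.
  have : 0 < kappa ^+ 2 / (N%:R) ^+ 2.
    by apply: divr_gt0; apply: exprn_gt0 => //; rewrite ltr0n; lia.
  rewrite /c => h; lra.
have a0 : a 0%N = 0 by [].
have a1 : a 1%N = 1 by [].
have aSS : forall k, a k.+2 = c * a k.+1 - a k by [].
have HN : N = N.-1.+1 by lia.
have Hm : N = (N./2 + N./2)%N.
  by have := odd_double_half N; rewrite (negbTE hodd) add0n -addnn => ->.
have Hm1 : (1 <= N./2)%N by lia.
have HX : forall i j : 'I_N.-1, X i j = @G R a N i.+1 j.+1 :> R by move=> i j; rewrite /X mxE.
exact: (main _ _ _ _ _ _ Hc a0 a1 aSS HN Hm Hm1 _ HX _ hk1).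
Qed.
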